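(* Let $X$, $Z$ be topological vector spaces, $C\subseteq Z$ a nonempty closed convex cone with $C^-\neq\{0\}$, $f:X\to\mathcal{F}(Z,C)$ and $x_0\in X$. If there is $z_0\in Z$ with $(x_0,z_0)\in\operatorname{Int}(\operatorname{gr}f)$, then $f$ is lattice-bounded above on some neighborhood of $x_0$. If $\operatorname{Int}C\neq\emptyset$, then conversely, if $f$ is lattice-bounded above on some neighborhood of $x_0$, there is $z_0\in Z$ with $(x_0,z_0)\in\operatorname{Int}(\operatorname{gr}f)$.
   Context: $\mathcal{F}(Z,C)=\{A\subseteq Z\colon A=\operatorname{cl}(A+C)\}$ (empty set included); $C^-=\{z^*\in Z^*\colon z^*(z)\le0\ \forall z\in C\}$. $\operatorname{gr}f=\{(x,z)\in X\times Z\colon z\in f(x)\}$, with interior taken in the product topology. $f$ is lattice-bounded above on $M\subseteq X$ iff there is $a\in Z$ with $a\in f(x)$ for all $x\in M$. *)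

(* Defs.v *)
From HB Require Import structures.
From mathcomp Require Import all_boot all_order all_algebra.
From mathcomp Require Import all_classical all_reals all_analysis.
Set Implicit Arguments. Unset Strict Implicit. Unset Printing Implicit Defensive.
Import Order.TTheory GRing.Theory Num.Theory.
Import numFieldTopology.Exports.
Local Open Scope classical_set_scope.
Local Open Scope ring_scope.

Section Defs.
Context {R : realType}.

Definition is_cone (Z : lmodType R) (C : set Z) : Prop :=
  forall (t : R) (z : Z), 0 < t -> C z -> C (t *: z).

Definition is_convex_set (Z : lmodType R) (C : set Z) : Prop :=
  forall (t : R) (x y : Z), 0 <= t <= 1 -> C x -> C y -> C (t *: x + (1 - t) *: y).

Definition msum (Z : lmodType R) (A B : set Z) : set Z :=
  [set z | exists a b, A a /\ B b /\ z = a + b].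

Definition in_FZC (Z : topologicalLmodType R) (C A : set Z) : Prop :=
  A = closure (msum A C).

Definition is_cont_linear_functional (Z : topologicalLmodType R) (g : Z -> R) : Prop :=
  (forall (a : R) (x y : Z), g (a *: x + y) = a * g x + g y) /\ continuous g.

Definition neg_dual_cone (Z : topologicalLmodType R) (C : set Z) : set (Z -> R) :=
  [set g | is_cont_linear_functional g /\ forall z, C z -> g z <= 0].

Definition graph_sv (X Z : Type) (f : X -> set Z) : set (X * Z) :=
  [set p | f p.1 p.2].

Definition lattice_bounded_above (X Z : Type) (f : X -> set Z) (M : set X) : Prop :=
  exists a : Z, forall x, M x -> f x a.

End Defs.

(* Main.v *)
Require Import Defs.
From HB Require Import structures.
From mathcomp Require Import all_boot all_order all_algebra.
From mathcomp Require Import all_classical all_reals all_analysis.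
Import Order.TTheory GRing.Theory Num.Theory.
Import numFieldTopology.Exports.
Local Open Scope classical_set_scope.
Local Open Scope ring_scope.

Theorem mainTheorem11 (R : realType) (X Z : topologicalLmodType R)
  (C : set Z) (f : X -> set Z) (x0 : X) :
  C !=set0 -> closed C -> is_cone C -> is_convex_set C ->
  neg_dual_cone C <> [set (fun _ : Z => 0 : R)] ->
  (forall x, in_FZC C (f x)) ->
  ((exists z0 : Z, interior (graph_sv f) (x0, z0)) ->
     exists M : set X, nbhs x0 M /\ lattice_bounded_above f M) /\
  (interior C !=set0 ->
     (exists M : set X, nbhs x0 M /\ lattice_bounded_above f M) ->
     exists z0 : Z, interior (graph_sv f) (x0, z0)).
Proof.
move=> _ _ _ _ _ hF; split.
  move=> [z0 hz]; move: hz; rewrite /interior /=.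
  case=> [[P Q]] /= [nP nQ] sub.
  exists P; split => //; exists z0 => x Px.
  apply: (sub (x, z0)); split => //=; exact: nbhs_singleton.
move=> [c Cc] [M [nM [a Ma]]].
exists (a + c); rewrite /interior /=.
have cv0 : (fun z : Z => z - a) @ (a + c) --> (a + c - a).
  apply: (@continuous_comp _ _ _ (fun z : Z => (z, a)) (fun x : Z * Z => x.1 - x.2)).
    by apply: cvg_pair => /=; [exact: cvg_id|exact: cvg_cst].
  exact: sub_continuous.
have e : a + c - a = c by rewrite [a + c]addrC addrK.
have cv : nbhs (a + c) [set z | C (z - a)].
  have h := cv0 C; rewrite e in h; exact: (h Cc).
exists (M, [set z | C (z - a)]); first by split.
case=> x z /= [Mx Cz]; rewrite /graph_sv /=.
rewrite (hF x); apply: subset_closure.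
by exists a, (z - a); split; [exact: Ma | split => //; rewrite addrC subrK].
Qed.
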